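(* For each $n$, let $W\in\mathbb{R}^{n\times n}$ be a random symmetric matrix with zero diagonal whose entries $W_{ij}$, $i<j$, are independent Rademacher random variables (uniform on $\{-1,+1\}$). For $S\subseteq[n]=\{1,\dots,n\}$ let $W_S$ denote the principal submatrix of $W$ with index set $S$. Then for every $\beta>0$ (independent of $n$) there exists $\alpha>0$ (independent of $n$) such that $$\max_{\substack{S\subseteq[n]\\|S|\leq \alpha n}}\|W_S\|_{2\to2}\leq \beta\sqrt{n}$$ with probability at least $1-4e^{-\alpha\log(1/\alpha)n}$.
   Context: $\|M\|_{2\to2}$ denotes the operator norm (largest singular value) of a matrix $M$ with respect to the Euclidean norm. *)

(* Defs.v *)
From HB Require Import structures.
From mathcomp Require Import all_boot all_order all_algebra.
From mathcomp Require Import all_classical all_reals all_analysis.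
Set Implicit Arguments. Unset Strict Implicit. Unset Printing Implicit Defensive.
Import Order.TTheory GRing.Theory Num.Theory.
Local Open Scope classical_set_scope.
Local Open Scope ring_scope.

Definition vnorm (R : realType) (k : nat) (v : 'cV[R]_k) : R :=
  Num.sqrt (\sum_(i < k) v i 0 ^+ 2).

Definition opnorm (R : realType) (m k : nat) (A : 'M[R]_(m, k)) : R :=
  sup [set vnorm (A *m v) | v in [set v : 'cV[R]_k | vnorm v <= 1]].

(* Only the coordinates (i,j) with i < j are used; they are then i.i.d.
   uniform bits, so W_ij (i<j) are independent Rademacher variables. *)
Definition sign (R : realType) (b : bool) : R := if b then 1 else -1.

Definition rademacherW (R : realType) (n : nat) (x : {ffun 'I_n * 'I_n -> bool})
  : 'M[R]_n :=
  \matrix_(i, j) (if (i < j)%N then sign R (x (i, j))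
                  else if (j < i)%N then sign R (x (j, i)) else 0).

(* Principal submatrix W_S, indexed by the elements of S in increasing order. *)
Definition principal_submx (R : realType) (n : nat) (A : 'M[R]_n) (S : {set 'I_n})
  : 'M[R]_#|S| :=
  \matrix_(i < #|S|, j < #|S|) A (enum_val i) (enum_val j).

Definition prob (R : realType) (n : nat) (E : pred {ffun 'I_n * 'I_n -> bool}) : R :=
  #|[set x | E x]|%:R / #|{ffun 'I_n * 'I_n -> bool}|%:R.

(* Main.v *)
Require Import Defs.
From HB Require Import structures.
From mathcomp Require Import all_boot all_order all_algebra.
From mathcomp Require Import all_classical all_reals all_analysis.
From mathcomp Require Import ring lra.
Import Order.TTheory GRing.Theory Num.Theory.
Local Open Scope ring_scope.
Set Implicit Arguments. Unset Strict Implicit. Unset Printing Implicit Defensive.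

Definition bil (R : realType) (n : nat) (W : 'M[R]_n) (u v : 'I_n -> R) : R :=
  \sum_i \sum_j u i * W i j * v j.
Definition sqs (R : realType) (n : nat) (u : 'I_n -> R) : R := \sum_i u i ^+ 2.
Definition nzc (R : realType) (n : nat) (u : 'I_n -> R) : R :=
  \sum_i (if u i != 0 then 1 else 0).
Definition inB (R : realType) (n : nat) (s : R) (u : 'I_n -> R) : Prop :=
  sqs u <= 1 /\ nzc u <= s.
Definition Mset (R : realType) (n : nat) (W : 'M[R]_n) (s : R) : set R :=
  [set r | exists u v, inB s u /\ inB s v /\ r = bil W u v].
Definition Msup (R : realType) (n : nat) (W : 'M[R]_n) (s : R) : R := sup (Mset W s).

Lemma opnorm_le (R : realType) (m k : nat) (A : 'M[R]_(m, k)) (c : R) :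
  (forall v, vnorm v <= 1 -> vnorm (A *m v) <= c) -> opnorm A <= c.
Proof.
move=> H; rewrite /opnorm; apply: ge_sup.
  exists (vnorm (A *m 0)); exists 0 => //=.
  rewrite /vnorm big1 ?sqrtr0 ?ler01 // => i _; rewrite mxE expr0n.
  by [].
by move=> r [v /= Hv <-]; apply: H.
Qed.

Lemma sq_le1 (R : realType) (n : nat) (u : 'I_n -> R) i : sqs u <= 1 -> `|u i| <= 1.
Proof.
move=> H.
have : u i ^+ 2 <= 1.
  apply: le_trans H; rewrite /sqs (bigD1 i) //= lerDl.
  by apply: sumr_ge0 => j _; apply: sqr_ge0.
move=> h2; rewrite ler_norml; apply/andP; split; nra.
Qed.

Lemma Mset_ub (R : realType) (n : nat) (W : 'M[R]_n) s :
  has_ubound (Mset W s).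
Proof.
exists (\sum_i \sum_j `|W i j|) => r [u [v [[Hu _] [[Hv _] ->]]]].
rewrite /bil; apply: ler_sum => i _; apply: ler_sum => j _.
apply: le_trans (ler_norm _) _; rewrite !normrM.
apply: (le_trans (y := 1 * `|W i j| * 1)); last by rewrite mul1r mulr1.
by apply: ler_pM; rewrite ?mulr_ge0 // ?(sq_le1 j Hv) //; apply: ler_pM; rewrite ?(sq_le1 i Hu).
Qed.

Lemma inB0 (R : realType) (n : nat) (s : R) : 0 <= s -> inB s (fun _ : 'I_n => 0).
Proof.
move=> s0; split.
  by rewrite /sqs big1 // => i _; rewrite expr0n.
by rewrite /nzc big1 // => i _; rewrite eqxx.
Qed.

Lemma Msup_ge (R : realType) (n : nat) (W : 'M[R]_n) s u v :
  inB s u -> inB s v -> bil W u v <= Msup W s.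
Proof.
move=> Hu Hv; apply: (ub_le_sup (Mset_ub W s)); by exists u, v.
Qed.

Lemma Msup_ge0 (R : realType) (n : nat) (W : 'M[R]_n) s : 0 <= s -> 0 <= Msup W s.
Proof.
move=> s0; have := Msup_ge W (inB0 n s0) (inB0 n s0).
by rewrite /bil big1 // => i _; rewrite big1 // => j _; rewrite !mul0r.
Qed.

Definition liftv (R : realType) (n : nat) (S : {set 'I_n}) (w : 'cV[R]_#|S|) : 'I_n -> R :=
  fun k => \sum_(i < #|S|) (if enum_val i == k then w i 0 else 0).

Lemma liftv_ev (R : realType) (n : nat) (S : {set 'I_n}) (w : 'cV[R]_#|S|) i :
  liftv w (enum_val i) = w i 0.
Proof.
rewrite /liftv (bigD1 i) //= eqxx big1 ?addr0 // => j ji.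
by rewrite (inj_eq enum_val_inj) (negbTE ji).
Qed.

Lemma liftv_out (R : realType) (n : nat) (S : {set 'I_n}) (w : 'cV[R]_#|S|) k :
  k \notin S -> liftv w k = 0.
Proof.
move=> kS; rewrite /liftv big1 // => i _.
case: eqP => // e; move: kS; rewrite -e; have := enum_valP i.
by move=> ->.
Qed.

Lemma sum_lift (R : realType) (n : nat) (S : {set 'I_n}) (G : 'I_n -> R) :
  (forall k, k \notin S -> G k = 0) -> \sum_k G k = \sum_(i < #|S|) G (enum_val i).
Proof.
move=> HG; rewrite -(big_enum_val (A := mem S)) /= [RHS]big_mkcond /=.
apply: eq_bigr => k _; case: ifP => // /negbT; exact: HG.
Qed.

Lemma opnorm_sub_le (R : realType) (n : nat) (W : 'M[R]_n) (S : {set 'I_n}) (s : R) :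
  #|S|%:R <= s -> opnorm (principal_submx W S) <= Msup W s.
Proof.
move=> HS; have s0 : 0 <= s by apply: le_trans HS.
apply: opnorm_le => v Hv.
set A := principal_submx W S.
set a := vnorm (A *m v).
have a0 : 0 <= a by apply: sqrtr_ge0.
have Ea : \sum_i (A *m v) i 0 ^+ 2 = a ^+ 2.
  by rewrite /a /vnorm sqr_sqrtr // sumr_ge0 // => i _; apply: sqr_ge0.
case: (eqVneq a 0) => [-> | an0]; first exact: Msup_ge0.
have ap : 0 < a by rewrite lt_def an0 a0.
set w : 'cV[R]_#|S| := a^-1 *: (A *m v).
have Hsum : forall (w' : 'cV[R]_#|S|), \sum_k liftv w' k ^+ 2 = \sum_i w' i 0 ^+ 2.
  move=> w'; rewrite (sum_lift (S:=S)); first by apply: eq_bigr => i _; rewrite liftv_ev.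
  by move=> k kS; rewrite liftv_out // expr0n.
have Hnz : forall (w' : 'cV[R]_#|S|), nzc (liftv w') <= s.
  move=> w'; apply: le_trans HS; rewrite /nzc -sum1_card natr_sum [X in _ <= X]big_mkcond /=.
  apply: ler_sum => k _; case: (boolP (k \in S)) => kS.
    by case: ifP => _; rewrite ?ler01 ?lexx.
  by rewrite liftv_out // eqxx.
have Hb : bil W (liftv w) (liftv v) = a.
  rewrite /bil (sum_lift (S:=S)); last first.
    by move=> k kS; rewrite big1 // => j _; rewrite liftv_out // !mul0r.
  transitivity (\sum_i w i 0 * (A *m v) i 0).
    apply: eq_bigr => i _; rewrite (sum_lift (S:=S)); last first.
      by move=> k kS; rewrite (liftv_out v kS) mulr0.
    rewrite [X in _ = _ * X]mxE big_distrr /=; apply: eq_bigr => j _.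
    by rewrite !liftv_ev /A /principal_submx !mxE mulrA.
  rewrite /w; under eq_bigr => i _ do rewrite [X in X * _]mxE -mulrA -expr2.
  rewrite -big_distrr /= Ea; field; exact: an0.
rewrite -Hb; apply: Msup_ge; split => //.
- rewrite /sqs Hsum /w; under eq_bigr do rewrite mxE exprMn.
  rewrite -big_distrr /= Ea -exprMn mulVf //; by rewrite expr1n.
- rewrite /sqs Hsum.
  have Hv0 : 0 <= \sum_i v i 0 ^+ 2 by rewrite sumr_ge0 // => i _; apply: sqr_ge0.
  rewrite -(sqr_sqrtr Hv0); move: Hv; rewrite /vnorm => Hv.
  by rewrite expr_le1 // sqrtr_ge0.
Qed.

Definition hh (R : realType) (s : R) : R := 4 * Num.sqrt (s + 1).
Definition KK (R : realType) (s : R) : nat := (Num.truncn (hh s)).+1.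
Definition val (R : realType) (K : nat) (c : 'I_K * bool) : R :=
  (if c.2 then -1 else 1) * (c.1 : nat)%:R.
Definition vecc (R : realType) (n : nat) (s : R) (k : {ffun 'I_n -> 'I_(KK s) * bool}) : 'I_n -> R :=
  fun i => val R (k i) / hh s.
Definition nzcode (R : realType) (K : nat) (c : 'I_K * bool) : R :=
  if ((c.1 : nat) != 0%N) || c.2 then 1 else 0.
Definition adm (R : realType) (n : nat) (s : R) (k : {ffun 'I_n -> 'I_(KK s) * bool}) : bool :=
  (\sum_i ((k i).1 : nat)%:R ^+ 2 <= hh s ^+ 2) && (\sum_i nzcode R (k i) <= s).
Definition codeu (R : realType) (n : nat) (s : R) (u : 'I_n -> R) : {ffun 'I_n -> 'I_(KK s) * bool} :=
  [ffun i => (inord (Num.truncn (hh s * `|u i|)), u i < 0)].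

Arguments vecc {R n} s k.
Arguments adm {R n} s k.
Arguments codeu {R n} s u.
Arguments val R {K} c.
Arguments nzcode R {K} c.

Lemma hh_gt0 (R : realType) (s : R) : 0 <= s -> 0 < hh s.
Proof. move=> s0; rewrite /hh mulr_gt0 // sqrtr_gt0; lra. Qed.

Lemma hh_sq (R : realType) (s : R) : 0 <= s -> hh s ^+ 2 = 16 * (s + 1).
Proof. move=> s0; rewrite /hh exprMn sqr_sqrtr; [ring | lra]. Qed.

Lemma coord_round (R : realType) (h x : R) : 0 < h -> `|x| <= 1 ->
  let t := Num.truncn (h * `|x|) in
  let y := (if x < 0 then -1 else 1) * t%:R / h in
  [/\ (t <= Num.truncn h)%N, t%:R <= h * `|x|, `|y| <= `|x|,
      (x - y) ^+ 2 <= h^-2 & (x = 0 -> t = 0%N)].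
Proof.
move=> h0 x1 t y.
have hx0 : 0 <= h * `|x| by rewrite mulr_ge0 ?normr_ge0 // ltW.
have tle : t%:R <= h * `|x| by rewrite truncn_le.
have tgt : h * `|x| < t.+1%:R by apply: truncnS_gt.
have t0 : (0 : R) <= t%:R by [].
have hinv : h^-2 = (1 / h) ^+ 2 by rewrite expr_div_n expr1n div1r.
have Ey : `|y| = t%:R / h.
  rewrite /y !normrM normfV (gtr0_norm h0) (ger0_norm t0).
  have -> : `|(if x < 0 then -1 else 1 : R)| = 1 by case: (x < 0); rewrite ?normrN normr1.
  by rewrite mul1r.
split.
- apply: le_truncn; rewrite -[X in _ <= X]mulr1; apply: ler_wpM2l; [exact: ltW | exact: x1].
- exact: tle.
- by rewrite Ey ler_pdivrMr // mulrC.
- have Ht : (x - y) = (if x < 0 then -1 else 1) * (`|x| - t%:R / h).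
    rewrite /y; case: ifP => xn.
      by rewrite ltr0_norm //; ring.
    by rewrite ger0_norm ?(negbT xn) ?leNgt ?xn //; ring.
  rewrite Ht exprMn; have -> : (if x < 0 then -1 else 1 : R) ^+ 2 = 1 by case: ifP => _; rewrite ?sqrrN expr1n.
  rewrite mul1r hinv.
  have a0 : t%:R / h <= `|x| by rewrite ler_pdivrMr // mulrC.
  have a1 : `|x| - t%:R / h <= 1 / h.
    rewrite ler_pdivlMr // mulrBl mulfVK ?gt_eqF //; rewrite -natr1 in tgt; lra.
  have a2 : 0 <= `|x| - t%:R / h by lra.
  nra.
- move=> x0; rewrite /t x0 normr0 mulr0; exact: truncn0.
Qed.

Lemma nzc_le (R : realType) (n : nat) (f g : 'I_n -> R) :
  (forall i, g i = 0 -> f i = 0) -> nzc f <= nzc g.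
Proof.
move=> H; rewrite /nzc; apply: ler_sum => i _.
case: (eqVneq (g i) 0) => [/H -> | _]; first by rewrite eqxx.
by case: ifP => _; rewrite ?ler01.
Qed.

Lemma codeu_fst (R : realType) (n : nat) (s : R) (u : 'I_n -> R) i :
  0 <= s -> `|u i| <= 1 ->
  ((codeu s u i).1 : nat) = Num.truncn (hh s * `|u i|).
Proof.
move=> s0 u1; rewrite /codeu ffunE /= inordK //.
by case: (coord_round (hh_gt0 s0) u1) => H _ _ _ _; rewrite ltnS.
Qed.

Lemma vecc_codeu (R : realType) (n : nat) (s : R) (u : 'I_n -> R) i :
  0 <= s -> `|u i| <= 1 ->
  vecc s (codeu s u) i =
    (if u i < 0 then -1 else 1) * (Num.truncn (hh s * `|u i|))%:R / hh s.
Proof.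
move=> s0 u1; rewrite /vecc /val codeu_fst //; by rewrite /codeu ffunE.
Qed.

Lemma sqle (R : realType) (a b : R) : 0 <= a -> a <= b -> a ^+ 2 <= b ^+ 2.
Proof. move=> a0 ab; nra. Qed.

Lemma round_props (R : realType) (n : nat) (s : R) (u : 'I_n -> R) :
  0 <= s -> inB s u ->
  [/\ adm s (codeu s u), inB s (vecc s (codeu s u)) &
      inB s (fun i => 4 * (u i - vecc s (codeu s u) i))].
Proof.
move=> s0 [Hu Hn].
have h0 := hh_gt0 s0.
have CR i := coord_round h0 (sq_le1 i Hu).
have VC i := @vecc_codeu R n s u i s0 (sq_le1 i Hu).
have CF i := @codeu_fst R n s u i s0 (sq_le1 i Hu).
have u0 i : u i = 0 -> vecc s (codeu s u) i = 0.
  move=> e; rewrite VC; case: (CR i) => _ _ _ _ /(_ e) ->; by rewrite mulr0 mul0r.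
split; [apply/andP; split | | ].
- apply: (le_trans (y := \sum_i hh s ^+ 2 * u i ^+ 2)).
    apply: ler_sum => i _; rewrite CF; case: (CR i) => _ H _ _ _.
    rewrite -[u i ^+ 2]real_normK ?num_real // -exprMn; exact: sqle.
  rewrite -big_distrr /= -[X in _ <= X]mulr1; apply: ler_wpM2l; first by rewrite sqr_ge0.
  exact: Hu.
- apply: (le_trans _ Hn); rewrite /nzc; apply: ler_sum => i _.
  rewrite /nzcode CF; case: (eqVneq (u i) 0) => [e|_].
    case: (CR i) => _ _ _ _ /(_ e) ->; by rewrite /codeu ffunE /= e ltxx.
  by case: ifP => _; rewrite ?ler01.
- split; last first.
    by apply: (le_trans _ Hn); apply: nzc_le => i /u0.
  apply: (le_trans _ Hu); apply: ler_sum => i _; case: (CR i) => _ _ H _ _.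
  have H' : `|vecc s (codeu s u) i| <= `|u i| by rewrite VC.
  rewrite -[X in X <= _]real_normK ?num_real // -[X in _ <= X]real_normK ?num_real //.
  exact: sqle.
- split; last first.
    by apply: (le_trans _ Hn); apply: nzc_le => i e; rewrite e u0 // subrr mulr0.
  apply: (le_trans (y := \sum_i 16 * (hh s)^-2 * (if u i != 0 then 1 else 0))).
    apply: ler_sum => i _; case: (eqVneq (u i) 0) => [e|_].
      by rewrite e u0 // subrr mulr0 expr0n /= mulr0.
    case: (CR i) => _ _ _ H _.
    have H' : (u i - vecc s (codeu s u) i) ^+ 2 <= hh s ^- 2 by rewrite VC.
    rewrite mulr1 exprMn.
    have -> : (4 : R) ^+ 2 = 16 by rewrite expr2; lra.
    by apply: ler_wpM2l.
  rewrite -big_distrr /=.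
  have hs : (hh s)^-2 = 1 / (16 * (s + 1)) by rewrite hh_sq // div1r.
  rewrite hs; rewrite -/(nzc u).
  have : nzc u / (s + 1) <= 1 by rewrite ler_pdivrMr; lra.
  have -> : 16 * (1 / (16 * (s + 1))) * nzc u = nzc u / (s + 1) by field; lra.
  done.
Qed.

Lemma bil_split (R : realType) (n : nat) (W : 'M[R]_n) (u v y z : 'I_n -> R) :
  bil W u v = bil W y z + bil W (fun i => u i - y i) v + bil W y (fun j => v j - z j).
Proof.
rewrite /bil -!big_split; apply: eq_bigr => i _; rewrite -!big_split.
by apply: eq_bigr => j _ /=; ring.
Qed.

Lemma bil_scl (R : realType) (n : nat) (W : 'M[R]_n) (c : R) (u v : 'I_n -> R) :
  bil W (fun i => c * u i) v = c * bil W u v.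
Proof.
rewrite /bil big_distrr; apply: eq_bigr => i _ /=; rewrite big_distrr.
by apply: eq_bigr => j _ /=; ring.
Qed.

Lemma bil_scr (R : realType) (n : nat) (W : 'M[R]_n) (c : R) (u v : 'I_n -> R) :
  bil W u (fun i => c * v i) = c * bil W u v.
Proof.
rewrite /bil big_distrr; apply: eq_bigr => i _ /=; rewrite big_distrr.
by apply: eq_bigr => j _ /=; ring.
Qed.

Lemma approx (R : realType) (n : nat) (W : 'M[R]_n) (s m : R) : 0 <= s ->
  (forall k1 k2, adm s k1 -> adm s k2 -> bil W (vecc s k1) (vecc s k2) <= m) ->
  Msup W s <= 2 * m.
Proof.
move=> s0 Hm.
suff : Msup W s <= m + Msup W s / 2 by lra.
apply: ge_sup; first by exists 0, (fun _ => 0), (fun _ => 0); split; [exact: inB0|split; [exact: inB0|rewrite /bil big1 // => i _; rewrite big1 // => j _; rewrite !mul0r]].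
move=> r [u [v [Hu [Hv ->]]]].
have [Au Yu Ru] := round_props s0 Hu.
have [Av Yv Rv] := round_props s0 Hv.
rewrite (bil_split W u v (vecc s (codeu s u)) (vecc s (codeu s v))).
have E1 : bil W (fun i => u i - vecc s (codeu s u) i) v =
          1/4 * bil W (fun i => 4 * (u i - vecc s (codeu s u) i)) v.
  by rewrite bil_scl mulrA (_ : 1/4 * 4 = 1 :> R) ?mul1r //; field.
have E2 : bil W (vecc s (codeu s u)) (fun j => v j - vecc s (codeu s v) j) =
          1/4 * bil W (vecc s (codeu s u)) (fun j => 4 * (v j - vecc s (codeu s v) j)).
  by rewrite bil_scr mulrA (_ : 1/4 * 4 = 1 :> R) ?mul1r //; field.
rewrite E1 E2.
have := Hm _ _ Au Av.
have := Msup_ge W Ru Hv.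
have := Msup_ge W Yu Rv.
lra.
Qed.

Lemma cosh_le (R : realType) (a : R) : expR a + expR (- a) <= 2 * expR (2 * a ^+ 2).
Proof.
have E1 := expR_ge1Dx a; have E2 := expR_ge1Dx (- a).
have F := expR_ge1Dx (2 * a ^+ 2).
have P1 := expR_gt0 a; have P2 := expR_gt0 (- a).
have M : expR a * expR (- a) = 1 by rewrite expRN mulfV // gt_eqF.
case: (lerP (1/2) `|a|) => ha.
  have h1 : a <= 2 * a ^+ 2 /\ - a <= 2 * a ^+ 2.
    move: ha; case: (lerP 0 a) => a0; [rewrite ger0_norm // | rewrite ltr0_norm //]; move=> ha; split; nra.
  case: h1 => h1 h2.
  have : expR a <= expR (2 * a ^+ 2) by rewrite ler_expR.
  have : expR (- a) <= expR (2 * a ^+ 2) by rewrite ler_expR.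
  lra.
have ha' : a ^+ 2 < 1/4.
  move: ha; case: (lerP 0 a) => a0; [rewrite ger0_norm // | rewrite ltr0_norm //]; move=> ha; nra.
have G1 : expR a * (1 - a) <= 1 by nra.
have G2 : expR (- a) * (1 + a) <= 1.
  have T := ler_wpM2l (ltW P2) E1; by rewrite [expR (- a) * expR a]mulrC M in T.
have ap : 0 <= 1 + a /\ 0 <= 1 - a.
  move: ha; case: (lerP 0 a) => a0; [rewrite ger0_norm // | rewrite ltr0_norm //]; move=> ha; lra.
case: ap => ap1 ap2.
have T1 := ler_wpM2r ap1 G1; have T2 := ler_wpM2r ap2 G2.
have G3 : (expR a + expR (- a)) * (1 - a ^+ 2) <= 2.
  have -> : (expR a + expR (- a)) * (1 - a ^+ 2) =
    expR a * (1 - a) * (1 + a) + expR (- a) * (1 + a) * (1 - a) by ring.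
  lra.
have G4 : 2 <= 2 * (1 + 2 * a ^+ 2) * (1 - a ^+ 2) by nra.
have G5 : expR a + expR (- a) <= 2 * (1 + 2 * a ^+ 2).
  have pos : 0 < 1 - a ^+ 2 by lra.
  rewrite -(ler_pM2r pos); lra.
lra.
Qed.

Definition coef (R : realType) (n : nat) (y z : 'I_n -> R) (p : 'I_n * 'I_n) : R :=
  if (p.1 < p.2)%N then y p.1 * z p.2 + y p.2 * z p.1 else 0.

Lemma bil_rad (R : realType) (n : nat) (x : {ffun 'I_n * 'I_n -> bool}) (y z : 'I_n -> R) :
  bil (rademacherW R x) y z = \sum_p coef y z p * sign R (x p).
Proof.
rewrite /bil.
transitivity (\sum_(i : 'I_n) \sum_(j : 'I_n) ((if (i < j)%N then y i * sign R (x (i, j)) * z j else 0)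
   + (if (j < i)%N then y i * sign R (x (j, i)) * z j else 0))).
  apply: eq_bigr => i _; apply: eq_bigr => j _; rewrite /rademacherW mxE.
  case: ltngtP => _; rewrite ?addr0 ?add0r //; ring.
rewrite (eq_bigr _ (fun i _ => big_split _ _ _ _ _)) big_split /= [X in _ + X]exchange_big /=.
rewrite -big_split /=.
transitivity (\sum_(i : 'I_n) \sum_(j : 'I_n) coef y z (i, j) * sign R (x (i, j))); last first.
  by rewrite pair_bigA; apply: eq_bigr => -[i j] _.
apply: eq_bigr => i _; rewrite -big_split; apply: eq_bigr => j _ /=.
by rewrite /coef /=; case: ifP => _; ring.
Qed.

Lemma card_ffun_R (R : realType) (I : finType) :
  \prod_(p : I) (2 : R) = #|{ffun I -> bool}|%:R.
Proof.
have -> : \prod_(p : I) (2 : R) = \prod_(p : I) \sum_(b : bool) (1 : R).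
  by apply: eq_bigr => p _; rewrite big_bool.
rewrite bigA_distr_bigA /=.
rewrite (eq_bigr (fun _ => 1)); last by move=> f _; rewrite big1.
by rewrite sumr_const.
Qed.

Lemma chernoff (R : realType) (I : finType) (c : I -> R) (m : R) :
  0 <= m -> \sum_p c p ^+ 2 <= 2 ->
  #|[set x : {ffun I -> bool} | m < \sum_p c p * sign R (x p)]|%:R <=
  #|{ffun I -> bool}|%:R * expR (- (m ^+ 2 / 16)).
Proof.
move=> m0 Hc.
set l := m / 8.
have l0 : 0 <= l by rewrite /l; lra.
set X := fun x : {ffun I -> bool} => \sum_p c p * sign R (x p).
have step1 : #|[set x : {ffun I -> bool} | m < X x]|%:R <= \sum_x expR (l * (X x - m)).
  rewrite -sum1_card natr_sum [X in X <= _]big_mkcond /=; apply: ler_sum => x _.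
  rewrite inE; case: ifP => h; last exact: expR_ge0.
  apply: le_trans (expR_ge1Dx _); rewrite lerDl mulr_ge0 //; lra.
have step2 : \sum_x expR (l * (X x - m)) =
    expR (- (l * m)) * \prod_p (expR (l * c p) + expR (- (l * c p))).
  have -> : \prod_p (expR (l * c p) + expR (- (l * c p))) =
            \prod_p \sum_(b : bool) expR (l * c p * sign R b).
    by apply: eq_bigr => p _; rewrite big_bool /sign mulr1 mulrN1.
  rewrite bigA_distr_bigA /= big_distrr /=; apply: eq_bigr => x _.
  rewrite -expR_sum -expRD; congr expR.
  rewrite /X mulrBr big_distrr /=; rewrite addrC; congr (_ + _).
  by apply: eq_bigr => p _; rewrite mulrA.
have step3 : \prod_p (expR (l * c p) + expR (- (l * c p))) <=
    #|{ffun I -> bool}|%:R * expR (2 * l ^+ 2 * \sum_p c p ^+ 2).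
  apply: (le_trans (y := \prod_p (2 * expR (2 * (l * c p) ^+ 2)))).
    apply: ler_prod => p _; rewrite addr_ge0 ?expR_ge0 //=; exact: cosh_le.
  rewrite big_split /= card_ffun_R; apply: ler_wpM2l => //.
  rewrite -expR_sum ler_expR big_distrr /=; rewrite le_eqVlt; apply/orP; left; apply/eqP/eq_bigr => p _; ring.
apply: (le_trans step1); rewrite step2.
apply: (le_trans (y := expR (- (l * m)) * (#|{ffun I -> bool}|%:R * expR (2 * l ^+ 2 * \sum_p c p ^+ 2)))).
  by apply: ler_wpM2l; first exact: expR_ge0.
rewrite mulrCA; apply: ler_wpM2l => //; rewrite -expRD ler_expR.
have : 2 * l ^+ 2 * \sum_p c p ^+ 2 <= 4 * l ^+ 2.
  have : 0 <= l ^+ 2 by apply: sqr_ge0.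
  nra.
rewrite /l; nra.
Qed.

Lemma coef_sq (R : realType) (n : nat) (y z : 'I_n -> R) :
  \sum_p coef y z p ^+ 2 <= 2 * (sqs y * sqs z).
Proof.
set G := fun i j : 'I_n => (y i * z j) ^+ 2.
have -> : \sum_p coef y z p ^+ 2 = \sum_(i : 'I_n) \sum_(j : 'I_n) coef y z (i, j) ^+ 2.
  by rewrite pair_bigA; apply: eq_bigr => -[i j] _.
apply: (le_trans (y := \sum_(i : 'I_n) \sum_(j : 'I_n)
   (2 * (if (i < j)%N then G i j else 0) + 2 * (if (i < j)%N then G j i else 0)))).
  apply: ler_sum => i _; apply: ler_sum => j _; rewrite /coef /G /=.
  case: ifP => _; last by rewrite expr0n /= !mulr0 addr0.
  set a := y i * z j; set b := y j * z i; have := sqr_ge0 (a - b); nra.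
have H2 : \sum_(i : 'I_n) \sum_(j : 'I_n) (if (i < j)%N then G j i else 0) =
          \sum_(i : 'I_n) \sum_(j : 'I_n) (if (j < i)%N then G i j else 0).
  by rewrite exchange_big.
have HG : \sum_(i : 'I_n) \sum_(j : 'I_n) G i j = sqs y * sqs z.
  rewrite /sqs big_distrl; apply: eq_bigr => i _ /=; rewrite big_distrr.
  by apply: eq_bigr => j _ /=; rewrite /G exprMn.
rewrite -HG.
rewrite (eq_bigr _ (fun i _ => big_split _ _ _ _ _)) big_split /=.
have E : forall F : 'I_n -> 'I_n -> R,
    \sum_(i : 'I_n) \sum_(j : 'I_n) 2 * F i j = 2 * \sum_(i : 'I_n) \sum_(j : 'I_n) F i j.
  by move=> F; rewrite mulr_sumr; apply: eq_bigr => i _; rewrite mulr_sumr.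
rewrite (E (fun i j => if (i < j)%N then G i j else 0)).
rewrite (E (fun i j => if (i < j)%N then G j i else 0)) H2 -mulrDr.
apply: ler_wpM2l => //; rewrite -big_split; apply: ler_sum => i _ /=.
rewrite -big_split; apply: ler_sum => j _ /=.
have G0 : 0 <= G i j by apply: sqr_ge0.
case: ltngtP => _ /=; lra.
Qed.

Lemma geom_half (R : realType) (N : nat) :
  \sum_(j < N) ((2 : R)^-1) ^+ j.+1 = 1 - (2^-1) ^+ N.
Proof.
elim: N => [|N IH]; first by rewrite big_ord0 expr0 subrr.
rewrite big_ord_recr /= IH exprS; field; lra.
Qed.

Lemma wt_le (R : realType) (t : nat) :
  expR (- (ln (2 : R) * (t%:R) ^+ 2)) <= (2^-1) ^+ t.
Proof.
have l2 : 0 <= ln (2 : R) by apply: ln_ge0; lra.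
apply: (le_trans (y := expR (- (ln (2 : R) * t%:R)))).
  rewrite ler_expR lerN2; apply: ler_wpM2l => //.
  case: t => [|t]; first by rewrite expr0n.
  rewrite expr2 -[X in X <= _]mul1r; apply: ler_wpM2r => //; by rewrite ler1n.
rewrite expRN expRM_natr lnK ?exprVn //; rewrite posrE; lra.
Qed.

Definition wt (R : realType) (K : nat) (b : R) (c : 'I_K * bool) : R :=
  expR (- (b * nzcode R c + ln 2 * ((c.1 : nat)%:R) ^+ 2)).

Lemma wt_sum (R : realType) (K : nat) (a : R) : 0 < a ->
  \sum_(c : 'I_K.+1 * bool) wt (ln (1 / a)) c <= 1 + 3 * a.
Proof.
move=> a0.
have Ea : expR (- ln (1 / a)) = a.
  by rewrite expRN lnK ?posrE ?divr_gt0 // div1r invrK.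
rewrite -(pair_bigA _ (fun t b => wt (ln (1 / a)) (t, b))) /=.
rewrite big_ord_recl /= big_bool /wt /nzcode /=.
rewrite expr0n /= !mulr0 !addr0 mulr1 oppr0 expR0 Ea.
set S := \sum_(i < K) _.
suff : S <= 2 * a by lra.
rewrite /S; apply: (le_trans (y := \sum_(i < K) (2 * a) * (2^-1) ^+ i.+1)).
  apply: ler_sum => i _; rewrite big_bool opprD expRD Ea.
  rewrite /= /bump /= add1n; have := wt_le R i.+1; have := expR_ge0 (- (ln (2:R) * (i.+1)%:R ^+ 2)); nra.
rewrite -mulr_sumr geom_half; have := exprn_ge0 K (_ : 0 <= (2:R)^-1).
move=> /(_ _) H; have {}H : 0 <= (2:R)^-1 ^+ K by apply: H; rewrite invr_ge0; lra.
nra.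
Qed.

Lemma adm_count (R : realType) (n : nat) (s a : R) : 0 < a -> a <= 1 -> 0 <= s ->
  \sum_(k : {ffun 'I_n -> 'I_(KK s) * bool}) (if adm s k then 1 else 0 : R) <=
  expR (ln (1 / a) * s + ln 2 * hh s ^+ 2) * expR (3 * a * n%:R).
Proof.
move=> a0 a1 s0.
set b := ln (1 / a).
have b0 : 0 <= b by rewrite /b ln_ge0 // ler_pdivlMr // mul1r.
have l2 : 0 <= ln (2 : R) by apply: ln_ge0; lra.
apply: (le_trans (y := \sum_(k : {ffun 'I_n -> 'I_(KK s) * bool})
                        expR (b * s + ln 2 * hh s ^+ 2) * \prod_i wt b (k i))).
  apply: ler_sum => k _; case: ifP => Hk; last first.
    by rewrite mulr_ge0 ?expR_ge0 // prodr_ge0 // => i _; apply: expR_ge0.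
  rewrite /wt -expR_sum -expRD; apply: le_trans (expR_ge1Dx _); rewrite lerDl.
  move/andP: Hk => [H1 H2].
  rewrite sumrN big_split /= -mulr_sumr -mulr_sumr subr_ge0.
  apply: lerD; first by apply: ler_wpM2l.
  by apply: ler_wpM2l.
rewrite -mulr_sumr; apply: ler_wpM2l; first exact: expR_ge0.
rewrite -(@bigA_distr_bigA _ _ _ _ _ _ _ (fun (i : 'I_n) (c : 'I_(KK s) * bool) => wt b c)) /=.
apply: (le_trans (y := \prod_(i : 'I_n) expR (3 * a))).
  apply: ler_prod => i _; rewrite sumr_ge0 /=; last by move=> c _; apply: expR_ge0.
  apply: le_trans (wt_sum _ a0) _; rewrite -[X in X <= _]addrC.
  by apply: le_trans (expR_ge1Dx _); rewrite addrC.
by rewrite prodr_const card_ord expRM_natr.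
Qed.

Lemma adm_sqs (R : realType) (n : nat) (s : R) (k : {ffun 'I_n -> 'I_(KK s) * bool}) :
  0 <= s -> adm s k -> sqs (vecc s k) <= 1.
Proof.
move=> s0 /andP [H1 _]; have h0 := hh_gt0 s0.
have -> : sqs (vecc s k) = (\sum_i ((k i).1 : nat)%:R ^+ 2) / hh s ^+ 2.
  rewrite /sqs mulr_suml; apply: eq_bigr => i _.
  rewrite /vecc /val expr_div_n exprMn.
  by case: ((k i).2); rewrite ?sqrrN expr1n mul1r.
rewrite ler_pdivrMr ?exprn_gt0 // mul1r.
exact: H1.
Qed.

Lemma sum01_lt1 (R : realType) (I : finType) (P : pred I) (s : R) :
  \sum_i (if P i then 1 else 0 : R) <= s -> s < 1 -> forall i, ~~ P i.
Proof.
move=> H s1 i; apply/negP => Pi.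
have : 1 <= \sum_i (if P i then 1 else 0 : R).
  rewrite (bigD1 i) //= Pi lerDl sumr_ge0 // => j _; by case: ifP.
lra.
Qed.

Lemma adm_small (R : realType) (n : nat) (s : R) (k : {ffun 'I_n -> 'I_(KK s) * bool}) :
  s < 1 -> adm s k -> forall i, vecc s k i = 0.
Proof.
move=> s1 /andP [_ H2] i.
have := sum01_lt1 (P := fun i => (((k i).1 : nat) != 0%N) || (k i).2) H2 s1 i.
rewrite negb_or => /andP [/negPn/eqP e _].
by rewrite /vecc /val e mulr0 mul0r.
Qed.

Definition Ev (R : realType) (n : nat) (s m : R) (x : {ffun 'I_n * 'I_n -> bool}) : bool :=
  [forall k1 : {ffun 'I_n -> 'I_(KK s) * bool}, forall k2 : {ffun 'I_n -> 'I_(KK s) * bool},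
     (adm s k1 && adm s k2) ==> (bil (rademacherW R x) (vecc s k1) (vecc s k2) <= m)].

Lemma good_of_Ev (R : realType) (n : nat) (s m : R) (x : {ffun 'I_n * 'I_n -> bool}) :
  0 <= s -> Ev s m x ->
  forall S : {set 'I_n}, #|S|%:R <= s -> opnorm (principal_submx (rademacherW R x) S) <= 2 * m.
Proof.
move=> s0 E S HS; apply: le_trans (opnorm_sub_le _ HS) _.
apply: approx => // k1 k2 a1 a2.
by move/forallP: E => /(_ k1) /forallP /(_ k2) /implyP; apply; rewrite a1 a2.
Qed.

Lemma Ev_small (R : realType) (n : nat) (s m : R) (x : {ffun 'I_n * 'I_n -> bool}) :
  s < 1 -> 0 <= m -> Ev s m x.
Proof.
move=> s1 m0; apply/forallP => k1; apply/forallP => k2; apply/implyP => /andP [a1 a2].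
rewrite /bil big1 // => i _; rewrite big1 // => j _.
by rewrite (adm_small s1 a1) !mul0r.
Qed.

Lemma term_le_sum (R : realType) (I : finType) (F : I -> R) i :
  (forall j, 0 <= F j) -> F i <= \sum_j F j.
Proof.
move=> H; rewrite (bigD1 i) //= lerDl sumr_ge0 // => j _; exact: H.
Qed.

Lemma count_notEv (R : realType) (n : nat) (s m : R) : 0 <= s -> 0 <= m ->
  #|[set x : {ffun 'I_n * 'I_n -> bool} | ~~ Ev s m x]|%:R <=
  (\sum_(k : {ffun 'I_n -> 'I_(KK s) * bool}) (if adm s k then 1 else 0 : R)) ^+ 2 *
  (#|{ffun 'I_n * 'I_n -> bool}|%:R * expR (- (m ^+ 2 / 16))).
Proof.
move=> s0 m0.
set C := #|{ffun 'I_n * 'I_n -> bool}|%:R * expR (- (m ^+ 2 / 16)).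
have C0 : 0 <= C by rewrite mulr_ge0 ?expR_ge0.
set Ad := fun k : {ffun 'I_n -> 'I_(KK s) * bool} => (if adm s k then 1 else 0 : R).
rewrite -sum1_card natr_sum big_mkcond /=.
apply: (le_trans (y := \sum_(x : {ffun 'I_n * 'I_n -> bool})
   \sum_(k1 : {ffun 'I_n -> 'I_(KK s) * bool}) \sum_(k2 : {ffun 'I_n -> 'I_(KK s) * bool})
     (if adm s k1 && adm s k2 && (m < bil (rademacherW R x) (vecc s k1) (vecc s k2)) then 1 else 0 : R))).
  apply: ler_sum => x _; rewrite inE.
  case: (boolP (Ev s m x)) => Ex /=.
    by rewrite sumr_ge0 // => k1 _; rewrite sumr_ge0 // => k2 _; case: ifP.
  move/forallPn: Ex => [k1 /forallPn [k2]]; rewrite negb_imply => /andP [aa hb].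
  rewrite (bigD1 k1) //= (bigD1 k2) //= aa /= ltNge hb /= -addrA lerDl.
  rewrite addr_ge0 // sumr_ge0 // => j _; first by case: ifP.
  by rewrite sumr_ge0 // => k2' _; case: ifP.
rewrite exchange_big /=.
apply: (le_trans (y := \sum_(k1 : {ffun 'I_n -> 'I_(KK s) * bool})
   \sum_(k2 : {ffun 'I_n -> 'I_(KK s) * bool}) Ad k1 * Ad k2 * C)).
  apply: ler_sum => k1 _; rewrite exchange_big /=; apply: ler_sum => k2 _.
  rewrite /Ad; case: (boolP (adm s k1)) => a1; case: (boolP (adm s k2)) => a2 /=;
    try by rewrite ?mul1r !mul0r big1.
  rewrite !mul1r.
  have -> : \sum_(x : {ffun 'I_n * 'I_n -> bool})
      (if m < bil (rademacherW R x) (vecc s k1) (vecc s k2) then 1 else 0 : R) =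
      #|[set x : {ffun 'I_n * 'I_n -> bool} |
          m < \sum_p coef (vecc s k1) (vecc s k2) p * sign R (x p)]|%:R.
    rewrite -sum1_card natr_sum [RHS]big_mkcond /=; apply: eq_bigr => x _.
    by rewrite inE bil_rad.
  apply: chernoff => //; apply: le_trans (coef_sq _ _) _.
  have := adm_sqs s0 a1; have := adm_sqs s0 a2.
  have : 0 <= sqs (vecc s k1) by rewrite /sqs sumr_ge0 // => i _; apply: sqr_ge0.
  have : 0 <= sqs (vecc s k2) by rewrite /sqs sumr_ge0 // => i _; apply: sqr_ge0.
  nra.
rewrite expr2 mulr_suml mulr_suml le_eqVlt; apply/orP; left; apply/eqP.
apply: eq_bigr => k1 _; rewrite mulr_sumr mulr_suml; apply: eq_bigr => k2 _.
by rewrite /Ad.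
Qed.

Lemma ln_inv_sq (R : realType) (g : R) : 0 < g -> ln (1 / g ^+ 2) <= 2 / g.
Proof.
move=> g0.
have p : 0 < 1 / g by rewrite divr_gt0.
have -> : 1 / g ^+ 2 = (1 / g) * (1 / g) by field; rewrite gt_eqF.
rewrite lnM ?posrE //.
have : ln (1 / g) <= 1 / g - 1.
  have H : ln (1 + (1 / g - 1)) <= 1 / g - 1 by apply: le_ln1Dx; lra.
  by rewrite addrC subrK in H.
have -> : 2 / g = 1 / g + 1 / g by field; rewrite gt_eqF.
lra.
Qed.


Unset Implicit Arguments.
Set Strict Implicit.

Theorem lemma2 (R : realType) (beta : R) :
  0 < beta ->
  exists alpha : R, 0 < alpha /\ alpha < 1 /\
    forall n : nat,
      1 - 4 * expR (- (alpha * ln (1 / alpha) * n%:R)) <=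
      prob R (fun x : {ffun 'I_n * 'I_n -> bool} =>
        [forall S : {set 'I_n},
          (#|S|%:R <= alpha * n%:R) ==>
          (opnorm (principal_submx (rademacherW R x) S) <= beta * Num.sqrt (n%:R))]).
Proof.
move=> b0.
pose c := (64 * 64 : R).
have c0 : 0 < c by rewrite /c mulr_gt0.
pose g := Num.min (1/2) (beta ^+ 2 / c).
have h5 : (0:R) < 1/2 by rewrite divr_gt0.
have g0 : 0 < g by rewrite /g lt_min h5 /= divr_gt0 // exprn_gt0.
have g1 : g <= 1/2 by rewrite /g ge_min lexx.
have g2 : g <= beta ^+ 2 / c by rewrite /g ge_min lexx orbT.
exists (g ^+ 2); split; first by rewrite exprn_gt0.
split; first by nra.
move=> n.
set a := g ^+ 2.
have a0 : 0 < a by rewrite exprn_gt0.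
have a1 : a <= 1 by rewrite /a; nra.
set s := a * n%:R.
have s0 : 0 <= s by rewrite mulr_ge0 // ltW.
set m := beta * Num.sqrt n%:R / 2.
have sq0 : 0 <= Num.sqrt (n%:R : R) by apply: sqrtr_ge0.
have m0 : 0 <= m by rewrite /m; apply: divr_ge0 => //; apply: mulr_ge0 => //; exact: ltW.
set P := (fun x : {ffun 'I_n * 'I_n -> bool} =>
        [forall S : {set 'I_n},
          (#|S|%:R <= a * n%:R) ==>
          (opnorm (principal_submx (rademacherW R x) S) <= beta * Num.sqrt (n%:R))]).
have Hsub : forall x, Ev s m x -> P x.
  move=> x Ex; apply/forallP => S; apply/implyP => HS.
  have := good_of_Ev s0 Ex HS.
  by have -> : 2 * m = beta * Num.sqrt n%:R by rewrite /m; field.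
set T := ({ffun 'I_n * 'I_n -> bool}).
have T0 : (0 < #|T|)%N by apply/card_gt0P; exists [ffun => false].
have T0R : (0 : R) < #|T|%:R by rewrite ltr0n.
have Hcard : (#|[set x : T | Ev s m x]| + #|[set x : T | ~~ Ev s m x]| = #|T|)%N.
  rewrite -(cardsC [set x : T | Ev s m x]); congr (_ + _)%N.
  by apply: eq_card => x; rewrite !inE.
have Hprob : 1 - #|[set x : T | ~~ Ev s m x]|%:R / #|T|%:R <= prob R P.
  rewrite /prob ler_pdivlMr // mulrBl divfK ?gt_eqF // mul1r.
  apply: (le_trans (y := #|[set x : T | Ev s m x]|%:R)).
    by rewrite -Hcard natrD; lra.
  rewrite ler_nat.
  have -> : #|[set x | P x]%classic| = #|[set x : T | P x]%SET|.
    apply: eq_card => x; rewrite [in RHS]inE.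
    apply/idP/idP; [by rewrite in_setE | by move=> Px; rewrite in_setE].
  apply: subset_leq_card; apply/fintype.subsetP => x; rewrite !inE; exact: Hsub.
apply: le_trans Hprob.
case: (ltrP s 1) => Hs.
  have -> : #|[set x : T | ~~ Ev s m x]| = 0%N.
    apply: eq_card0 => x; by rewrite !inE Ev_small.
  rewrite mul0r subr0; have := expR_ge0 (- (a * ln (1 / a) * n%:R)); lra.
set b := ln (1 / a).
have Hb : b * g <= 2.
  have := ln_inv_sq g0; rewrite -/a -/b => H.
  by rewrite -(ler_pdivlMr _ _ g0).
have l2 : ln (2 : R) <= 1 by have := @le_ln1Dx R 1; rewrite (_ : 1 + 1 = 2 :> R) //; apply; lra.
have l20 : 0 <= ln (2 : R) by apply: ln_ge0; lra.
set A := \sum_(k : {ffun 'I_n -> 'I_(KK s) * bool}) (if adm s k then 1 else 0 : R).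
have A0 : 0 <= A by rewrite sumr_ge0 // => k _; case: ifP.
have HA := adm_count n a0 a1 s0; rewrite -/A -/b in HA.
have HN := count_notEv n s0 m0; rewrite -/A -/T in HN.
have Hfrac : #|[set x : T | ~~ Ev s m x]|%:R / #|T|%:R <= A ^+ 2 * expR (- (m ^+ 2 / 16)).
  rewrite ler_pdivrMr //.
  have -> : A ^+ 2 * expR (- (m ^+ 2 / 16)) * #|T|%:R =
            A ^+ 2 * (#|T|%:R * expR (- (m ^+ 2 / 16))) by ring.
  exact: HN.
suff : A ^+ 2 * expR (- (m ^+ 2 / 16)) <= expR (- (a * b * n%:R)).
  have := expR_ge0 (- (a * b * n%:R)); lra.
apply: (le_trans (y := (expR (b * s + ln 2 * hh s ^+ 2) * expR (3 * a * n%:R)) ^+ 2 * expR (- (m ^+ 2 / 16)))).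
  by apply: ler_wpM2r; [exact: expR_ge0 | exact: sqle].
rewrite -!expRD expr2 -!expRD ler_expR.
have Hh : hh s ^+ 2 <= 32 * s by rewrite hh_sq //; lra.
have Hm : m ^+ 2 = beta ^+ 2 * n%:R / 4.
  by rewrite /m expr_div_n exprMn sqr_sqrtr ?ler0n //; field.
rewrite Hm /s.
have n0 : (0 : R) <= n%:R by [].
have g3 : g * 64 * 64 <= beta ^+ 2.
  by move: g2; rewrite ler_pdivlMr // /c mulrA.
have Key : 3 * a * b + 70 * a <= beta ^+ 2 / 64.
  have e1 : a * b <= 2 * g by rewrite /a expr2 -mulrA; nra.
  have e2 : a <= g / 2 by rewrite /a expr2; nra.
  rewrite ler_pdivlMr //; lra.
have KeyN : (3 * a * b + 70 * a) * n%:R <= beta ^+ 2 / 64 * n%:R by apply: ler_wpM2r.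
have h2 : 0 <= hh s ^+ 2 by apply: sqr_ge0.
have Hh' : ln 2 * hh s ^+ 2 <= 32 * (a * n%:R).
  apply: le_trans Hh; rewrite -[X in _ <= X]mul1r; exact: ler_wpM2r.
lra.
Qed.
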